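(* Let $G$ be a connected graph of order at least three. If $G$ has an independent $\gamma$-set that contains no leaf of $G$, then $\gamma(G)=\gamma_{\rm cer}(G)$.
   Context: All graphs are finite and simple. A set $D\subseteq V_G$ is a dominating set of $G$ if every vertex of $V_G-D$ has a neighbor in $D$; $\gamma(G)$ is the minimum cardinality of a dominating set, and a $\gamma$-set is a dominating set of cardinality $\gamma(G)$. A set $D\subseteq V_G$ is a certified dominating set of $G$ if $D$ is a dominating set of $G$ and every vertex of $D$ has either zero or at least two neighbors in $V_G-D$; $\gamma_{\rm cer}(G)$ is the minimum cardinality of a certified dominating set of $G$. A leaf is a vertex of degree one. *)

(* Defs.v *)
From mathcomp Require Import all_boot.
Set Implicit Arguments. Unset Strict Implicit. Unset Printing Implicit Defensive.

Definition simple_graph (T : finType) (e : rel T) : Prop :=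
  symmetric e /\ irreflexive e.

Definition connected_graph (T : finType) (e : rel T) : Prop :=
  forall x y : T, connect e x y.

Definition nbhd (T : finType) (e : rel T) (v : T) : {set T} := [set u | e v u].

Definition is_leaf (T : finType) (e : rel T) (v : T) : bool :=
  #|nbhd e v| == 1.

Definition dominating (T : finType) (e : rel T) (D : {set T}) : bool :=
  [forall v, (v \notin D) ==> [exists u in D, e v u]].

Definition independent (T : finType) (e : rel T) (D : {set T}) : bool :=
  [forall u in D, forall v in D, ~~ e u v].

Definition certified (T : finType) (e : rel T) (D : {set T}) : bool :=
  dominating e D &&
  [forall v in D, (#|nbhd e v :\: D| == 0) || (2 <= #|nbhd e v :\: D|)].

(* minimum cardinality of a dominating set ([set: T] is always dominating,
   so #|T| is a valid upper default) *)
Definition gamma (T : finType) (e : rel T) : nat :=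
  \big[minn/#|T|]_(D : {set T} | dominating e D) #|D|.

Definition gamma_cer (T : finType) (e : rel T) : nat :=
  \big[minn/#|T|]_(D : {set T} | certified e D) #|D|.

Definition gamma_set (T : finType) (e : rel T) (D : {set T}) : bool :=
  dominating e D && (#|D| == gamma e).

(* Main.v *)
Require Import Defs.
From mathcomp Require Import all_boot.

Lemma min_le_seq (T : finType) (P : pred {set T}) (D : {set T}) s :
  P D -> D \in s -> \big[minn/#|T|]_(X <- s | P X) #|X| <= #|D|.
Proof.
move=> PD; elim: s => // a s IH; rewrite inE big_cons.
case/orP=> [/eqP<-|/IH h]; first by rewrite PD geq_minl.
by case: (P a) => //; rewrite geq_min h orbT.
Qed.

Lemma min_le (T : finType) (P : pred {set T}) (D : {set T}) :
  P D -> \big[minn/#|T|]_(X : {set T} | P X) #|X| <= #|D|.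
Proof. by move=> PD; apply: min_le_seq => //; rewrite mem_index_enum. Qed.

Lemma gamma_le_cer (T : finType) (e : rel T) : gamma e <= gamma_cer e.
Proof.
rewrite /gamma_cer; apply: (big_ind (fun x => gamma e <= x)).
- by rewrite -cardsT; apply: min_le; apply/forallP=> v; rewrite in_setT.
- by move=> x y hx hy; rewrite leq_min hx hy.
- by move=> D /andP[hD _]; apply: min_le.
Qed.

Theorem corollary2p2 (T : finType) (e : rel T) :
  simple_graph e -> connected_graph e -> 2 < #|T| ->
  (exists D : {set T},
      [/\ gamma_set e D, independent e D & forall v, v \in D -> ~~ is_leaf e v]) ->
  gamma e = gamma_cer e.
Proof.
move=> _ _ _ [D [/andP[hdom /eqP hcard] hind hleaf]].
apply/eqP; rewrite eqn_leq gamma_le_cer /= -hcard /gamma_cer.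
apply: min_le; rewrite /certified hdom /=.
apply/forall_inP=> v vD.
have -> : nbhd e v :\: D = nbhd e v.
  apply/setP=> u; rewrite !inE; case uD: (u \in D) => //=.
  by move/forall_inP: hind => /(_ v vD) /forall_inP /(_ u uD) /negbTE ->.
move: (hleaf v vD); rewrite /is_leaf.
by case: #|nbhd e v| => [|[|n]].
Qed.
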